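(* For every positive integer $t$ there exist constants $\alpha,\beta,\gamma>0$ such that the following holds. Let $s$ be a positive integer and $n\geq 2$ an integer, and let $G$ be a semilinear graph of complexity $t$ on $n$ vertices that contains no clique of size $s$. Then $$\chi(G)\leq \alpha s^{\beta}(\log n)^{\gamma}.$$
   Context: A function $f:\mathbb{R}^{m}\to\mathbb{R}$ is linear if $f(\mathbf{x})=b+\sum_{i=1}^m a_i\mathbf{x}(i)$ for some reals $a_1,\dots,a_m,b$. A (finite, simple) graph $G$ is semilinear of complexity $t$ if $V(G)\subset\mathbb{R}^d$ for some positive integer $d$, and there are $t$ linear functions $f_1,\dots,f_t:\mathbb{R}^d\times\mathbb{R}^d\to\mathbb{R}$ and a Boolean function $\phi:\{\mathrm{F},\mathrm{T}\}^{3t}\to\{\mathrm{F},\mathrm{T}\}$ such that for distinct $\mathbf{x},\mathbf{y}\in V(G)$, $\{\mathbf{x},\mathbf{y}\}$ is an edge iff $\phi\big(\{f_i(\mathbf{x},\mathbf{y})<0,\ f_i(\mathbf{x},\mathbf{y})\leq 0,\ f_i(\mathbf{x},\mathbf{y})=0\}_{i\in[t]}\big)=\mathrm{T}$; it is assumed that this truth value is unchanged when $\mathbf{x}$ and $\mathbf{y}$ are swapped. $\chi(G)$ is the chromatic number. *)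

(* Defs.v *)
From HB Require Import structures.
From mathcomp Require Import all_boot all_order all_algebra.
From mathcomp Require Import all_classical all_reals all_analysis.
Set Implicit Arguments. Unset Strict Implicit. Unset Printing Implicit Defensive.
Import Order.TTheory GRing.Theory Num.Theory.
Local Open Scope ring_scope.

Definition colorable (T : finType) (e : rel T) (k : nat) : bool :=
  [exists f : {ffun T -> 'I_k}, [forall x, forall y, e x y ==> (f x != f y)]].

Lemma colorable_card (T : finType) (e : rel T) :
  irreflexive e -> exists k, colorable e k.
Proof.
move=> irr; exists #|T|; apply/existsP; exists [ffun x => enum_rank x].
apply/forallP=> x; apply/forallP=> y; apply/implyP=> exy.
rewrite !ffunE; apply/negP=> /eqP /enum_rank_inj exy'.
by move: exy; rewrite exy' irr.
Qed.

Definition chromatic_number (T : finType) (e : rel T) (irr : irreflexive e) : nat :=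
  ex_minn (colorable_card irr).

Definition clique (T : finType) (e : rel T) (S : {set T}) : Prop :=
  forall x y, x \in S -> y \in S -> x != y -> e x y.

Definition linf (R : realType) (t d : nat)
  (ax ay : 'I_t -> 'rV[R]_d) (b : 'I_t -> R) (i : 'I_t) (x y : 'rV[R]_d) : R :=
  b i + \sum_(j < d) ax i ord0 j * x ord0 j + \sum_(j < d) ay i ord0 j * y ord0 j.

(* The Boolean function phi : {F,T}^{3t} -> {F,T} is represented with its 3t
   arguments grouped as three t-tuples: the truth values of
   f_i < 0, f_i <= 0, f_i = 0 for i in [t]. *)
Definition semilin_val (R : realType) (t d : nat)
  (ax ay : 'I_t -> 'rV[R]_d) (b : 'I_t -> R)
  (phi : {ffun 'I_t -> bool} -> {ffun 'I_t -> bool} -> {ffun 'I_t -> bool} -> bool)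
  (x y : 'rV[R]_d) : bool :=
  phi [ffun i => linf ax ay b i x y < 0]
      [ffun i => linf ax ay b i x y <= 0]
      [ffun i => linf ax ay b i x y == 0].

(* The semilinear graph on the vertex set {p i | i < n} (p injective):
   vertices i, j adjacent iff they are distinct and phi(...) is true. *)
Definition semilin_rel (R : realType) (t d n : nat)
  (ax ay : 'I_t -> 'rV[R]_d) (b : 'I_t -> R)
  (phi : {ffun 'I_t -> bool} -> {ffun 'I_t -> bool} -> {ffun 'I_t -> bool} -> bool)
  (p : 'I_n -> 'rV[R]_d) : rel 'I_n :=
  fun i j => (i != j) && semilin_val ax ay b phi (p i) (p j).

Lemma semilin_rel_irr (R : realType) (t d n : nat) ax ay b phi
  (p : 'I_n -> 'rV[R]_d) : irreflexive (@semilin_rel R t d n ax ay b phi p).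
Proof. by move=> i; rewrite /semilin_rel eqxx. Qed.

(* Main.v *)
Require Import Defs.
From HB Require Import structures.
From mathcomp Require Import all_boot all_order all_algebra.
From mathcomp Require Import all_classical all_reals all_analysis.
From mathcomp Require Import zify ring lra.
Import Order.TTheory GRing.Theory Num.Theory.

Module Aux.
Set Implicit Arguments. Unset Strict Implicit. Unset Printing Implicit Defensive.
Local Open Scope nat_scope.

Section ColorA.
Variables (n s : nat) (e : rel 'I_n).
Hypothesis irr : irreflexive e.
Hypothesis esym : forall x y, e x y -> e y x.
Hypothesis nocl : forall S : {set 'I_n}, #|S| = s ->
  ~ (forall x y, x \in S -> y \in S -> x != y -> e x y).
Variables (C Pat : finType) (code : 'I_n -> C) (pat : 'I_n -> 'I_n -> Pat).
Hypothesis pat_trans : forall x y z, code x = code y -> code y = code z ->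
  pat x y = pat y z -> pat x z = pat x y.
Hypothesis e_det : forall x y x' y', code x = code y -> code x' = code y' ->
  code x = code x' -> pat x y = pat x' y' -> x != y -> x' != y' -> e x y = e x' y'.

Definition relp (sg : Pat) (x y : 'I_n) :=
  [&& code x == code y, pat x y == sg, e x y & (x < y)%N].

Lemma relpT sg x y z : relp sg x y -> relp sg y z -> relp sg x z.
Proof.
case/and4P=> /eqP cxy /eqP pxy exy lxy; case/and4P=> /eqP cyz /eqP pyz eyz lyz.
have lxz : (x < z)%N by apply: ltn_trans lyz.
have pxz : pat x z = pat x y by apply: pat_trans => //; rewrite pxy pyz.
apply/and4P; split=> //.
- by rewrite cxy cyz.
- by rewrite pxz pxy.
have H : e x y = e x z.
  apply: (e_det (x:=x) (y:=y) (x':=x) (y':=z)) => //.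
  - by rewrite cxy cyz.
  - by apply: contraTneq lxy => ->; rewrite ltnn.
  - by apply: contraTneq lxz => ->; rewrite ltnn.
by rewrite -H.
Qed.

Definition chainp sg (S : {set 'I_n}) :=
  [forall y in S, forall z in S, (y < z)%N ==> relp sg y z].
Definition okp sg x (S : {set 'I_n}) :=
  [&& x \in S, chainp sg S & [forall y in S, (y <= x)%N]].
Definition hp sg x := \max_(S : {set 'I_n} | okp sg x S) #|S|.

Lemma chain_small sg S : chainp sg S -> (#|S| < s)%N.
Proof.
move=> ch; rewrite ltnNge; apply/negP=> /card_geqP [q [uq sz sub]].
apply: (nocl (S := [set x in q])).
  by rewrite cardsE; move/card_uniqP: uq; rewrite sz.
move=> x y; rewrite !inE => xq yq nxy.
have xS := sub _ xq; have yS := sub _ yq.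
move/forallP: ch => ch.
have [lxy|lyx|EQ] := ltngtP x y.
- by move: (ch x); rewrite xS /= => /forallP /(_ y); rewrite yS lxy /= => /and4P [].
- apply: esym.
  by move: (ch y); rewrite yS /= => /forallP /(_ x); rewrite xS lyx /= => /and4P [].
- by move: nxy; rewrite (val_inj EQ) eqxx.
Qed.

Lemma hp_lt sg x : (hp sg x < s.+1)%N.
Proof.
rewrite ltnS; apply/bigmax_leqP => S /and3P [_ ch _].
by apply: ltnW; apply: chain_small ch.
Qed.

Lemma hp_incr sg x y : relp sg x y -> (hp sg x < hp sg y)%N.
Proof.
move=> rxy.
have okx : okp sg x [set x].
  apply/and3P; split; first by rewrite inE.
    apply/forallP=> a; apply/implyP; rewrite inE => /eqP ->.
    apply/forallP=> b; apply/implyP; rewrite inE => /eqP ->.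
    by rewrite ltnn.
  by apply/forallP=> a; apply/implyP; rewrite inE => /eqP ->.
have [S okS hS] : {S | okp sg x S & hp sg x = #|S|}.
  rewrite /hp; apply: eq_bigmax_cond.
  by apply/card_gt0P; exists [set x].
move: (rxy) => /and4P [_ _ _ lxy].
case/and3P: okS => xS chS topS.
have yS : y \notin S.
  apply/negP=> yS; move/forallP: topS => /(_ y); rewrite yS /=.
  by rewrite leqNgt lxy.
have ok' : okp sg y (y |: S).
  apply/and3P; split; first by rewrite !inE eqxx.
    apply/forallP=> a; apply/implyP; rewrite !inE => /orP aS.
    apply/forallP=> b; apply/implyP; rewrite !inE => /orP bS.
    apply/implyP=> lab.
    case: aS => [/eqP ea|aS].
      case: bS => [/eqP eb|bS]; first by move: lab; rewrite ea eb ltnn.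
      move/forallP: topS => /(_ b); rewrite bS /= => lbx.
      by move: lab; rewrite ea => lyb; have := leq_trans lyb lbx; rewrite ltnNge ltnW.
    case: bS => [/eqP eb|bS].
      rewrite eb.
      move/forallP: topS => /(_ a); rewrite aS /= leq_eqVlt => /orP [/eqP eax|lax].
        by have -> : a = x by apply: val_inj.
      apply: relpT rxy.
      by move/forallP: chS => /(_ a); rewrite aS /= => /forallP /(_ x); rewrite xS lax.
    by move/forallP: chS => /(_ a); rewrite aS /= => /forallP /(_ b); rewrite bS lab.
  apply/forallP=> a; apply/implyP; rewrite !inE => /orP [/eqP ->|aS] //.
  move/forallP: topS => /(_ a); rewrite aS /= => lax.
  by apply: ltnW; apply: leq_ltn_trans lax lxy.
rewrite hS; apply: leq_trans (leq_bigmax_cond _ ok').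
by rewrite cardsU1 yS.
Qed.

Definition colA (x : 'I_n) : C * {ffun Pat -> 'I_s.+1} :=
  (code x, [ffun sg => Ordinal (hp_lt sg x)]).

Lemma colA_proper x y : e x y -> colA x != colA y.
Proof.
move=> exy; apply/negP=> /eqP [cxy /ffunP hxy].
have nxy : x != y by apply/negP=> /eqP exy'; move: exy; rewrite exy' irr.
have [lxy|lyx|EQ] := ltngtP x y.
- have r : relp (pat x y) x y by apply/and4P; split=> //; rewrite cxy.
  have := hxy (pat x y); rewrite !ffunE => -[] E.
  by move: (hp_incr r); rewrite E ltnn.
- have r : relp (pat y x) y x by apply/and4P; split=> //; [rewrite cxy|apply: esym].
  have := hxy (pat y x); rewrite !ffunE => -[] E.
  by move: (hp_incr r); rewrite E ltnn.
- by move: nxy; rewrite (val_inj EQ) eqxx.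
Qed.

Lemma colA_colorable :
  [exists f : {ffun 'I_n -> 'I_#|{: C * {ffun Pat -> 'I_s.+1}}|},
     [forall x, forall y, e x y ==> (f x != f y)]].
Proof.
apply/existsP; exists [ffun x => enum_rank (colA x)].
apply/forallP=> x; apply/forallP=> y; apply/implyP=> exy.
by rewrite !ffunE (inj_eq enum_rank_inj) colA_proper.
Qed.

End ColorA.

Lemma jex (a b : nat) : exists j, a %/ 2 ^ j.+1 == b %/ 2 ^ j.+1.
Proof.
exists (a + b); rewrite !divn_small //.
- by have := ltn_expl (a + b).+1 (isT : 1 < 2); lia.
- by have := ltn_expl (a + b).+1 (isT : 1 < 2); lia.
Qed.

Definition jdx a b := ex_minn (jex a b).

Lemma div2S a j : a %/ 2 ^ j.+1 = a %/ 2 ^ j %/ 2.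
Proof. by rewrite expnS mulnC divnMA. Qed.

Lemma jdx_spec a b : a %/ 2 ^ jdx a b %/ 2 = b %/ 2 ^ jdx a b %/ 2.
Proof. by rewrite /jdx; case: ex_minnP => m /eqP; rewrite !div2S. Qed.

Lemma jdx_neq a b : a != b -> a %/ 2 ^ jdx a b != b %/ 2 ^ jdx a b.
Proof.
move=> nab; rewrite /jdx; case: ex_minnP => m _ mn.
case: m mn => [|m] mn; first by rewrite expn0 !divn1.
apply/negP => E; have := mn m E; by rewrite ltnn.
Qed.

Lemma jdx_bound a b K : a < 2 ^ K.+1 -> b < 2 ^ K.+1 -> jdx a b <= K.
Proof.
move=> ha hb; rewrite /jdx; case: ex_minnP => m _ mn.
by apply: mn; rewrite !divn_small.
Qed.

Definition cls a b : option (nat * bool) :=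
  if a == b then None else Some (jdx a b, odd (a %/ 2 ^ jdx a b)).
Definition pos a b := if a == b then a else a %/ 2 ^ (jdx a b).+1.

Definition Glt (c : option (nat * bool)) (lt eq : bool) :=
  match c with None => lt | Some (_, false) => lt || eq | Some (_, true) => lt end.
Definition Gle (c : option (nat * bool)) (lt eq : bool) :=
  match c with None => lt || eq | Some (_, false) => lt || eq | Some (_, true) => lt end.
Definition Geq (c : option (nat * bool)) (lt eq : bool) :=
  match c with None => eq | Some _ => false end.

Lemma divcmp x y d : x %/ d != y %/ d ->
  [/\ (x < y) = (x %/ d < y %/ d), (x <= y) = (x %/ d < y %/ d) & (x == y) = false].
Proof.
move=> nxy.
have h1 : x %/ d < y %/ d -> x < y.
  by move=> l; rewrite ltnNge; apply/negP=> /(leq_div2r d); rewrite leqNgt l.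
have h2 : y %/ d < x %/ d -> y < x.
  by move=> l; rewrite ltnNge; apply/negP=> /(leq_div2r d); rewrite leqNgt l.
have [l|l|E] := ltngtP (x %/ d) (y %/ d).
- by have := h1 l; split=> //; lia.
- by have := h2 l; split; lia.
- by rewrite E eqxx in nxy.
Qed.

Lemma par (c : bool) A1 A2 B2 : A1 %% 2 = c -> A2 %% 2 = c -> A2 %/ 2 = B2 %/ 2 ->
  A2 != B2 -> A1 != B2 /\
  (A1 < B2) = (if c then A1 %/ 2 < A2 %/ 2 else (A1 %/ 2 < A2 %/ 2) || (A1 %/ 2 == A2 %/ 2)).
Proof.
move=> m1 m2 s2 /eqP d2.
have e1 := divn_eq A1 2; have e2 := divn_eq A2 2; have e3 := divn_eq B2 2.
have o3 := ltn_pmod B2 (isT : 0 < 2).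
move: (A1 %/ 2) (A2 %/ 2) (B2 %/ 2) (B2 %% 2) s2 e1 e2 e3 o3 => P1 P2 P3 r s2 e1 e2 e3 o3.
subst P3; rewrite m1 in e1; rewrite m2 in e2.
case: c m1 m2 e1 e2 => m1 m2 e1 e2 /=.
- split; first by apply/eqP; lia.
  by apply/idP/idP; lia.
- split; first by apply/eqP; lia.
  by apply/idP/idP; lia.
Qed.

Lemma key a1 b1 a2 b2 : cls a1 b1 = cls a2 b2 ->
  let p := pos a1 b1 in let q := pos a2 b2 in
  [/\ (a1 < b2) = Glt (cls a1 b1) (p < q) (p == q),
      (a1 <= b2) = Gle (cls a1 b1) (p < q) (p == q) &
      (a1 == b2) = Geq (cls a1 b1) (p < q) (p == q)].
Proof.
rewrite /cls /pos.
have [E1|n1] := eqVneq a1 b1; have [E2|n2] := eqVneq a2 b2 => //=.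
- by move=> _; rewrite -E2; split=> //; rewrite leq_eqVlt orbC.
case=> ej ec.
set j := jdx a1 b1.
have s1 := jdx_spec a1 b1; have s2 := jdx_spec a2 b2.
have d1 := jdx_neq n1; have d2 := jdx_neq n2.
rewrite -ej -/j in s2 d2 ec *; rewrite -/j in s1 d1.
rewrite !div2S.
set A1 := a1 %/ 2 ^ j in s1 d1 ec *; set B1 := b1 %/ 2 ^ j in s1 d1.
set A2 := a2 %/ 2 ^ j in s2 d2 ec *; set B2 := b2 %/ 2 ^ j in s2 d2 *.
have m1 := modn2 A1; have m2 := modn2 A2.
rewrite ec in m1.
have [nAB E] := par m1 m2 s2 d2.
have [-> -> ->] := divcmp nAB.
rewrite ec; case: (odd A2) E => E; rewrite E; split=> //.
Qed.
Lemma tr3 (u v w : nat) : (u < v) = (v < w) -> (u == v) = (v == w) ->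
  ((u < w) = (u < v)) * ((u == w) = (u == v)).
Proof.
move=> e1 e2.
case: (ltngtP u v) e1 e2 => h; case: (ltngtP v w) => h' //= _ _; split; apply/idP/idP; lia.
Qed.

End Aux.
Import Aux.

Local Open Scope ring_scope.

Section Semi.
Variables (R : realType) (t d n : nat) (ax ay : 'I_t -> 'rV[R]_d) (b : 'I_t -> R).
Variable (phi : {ffun 'I_t -> bool} -> {ffun 'I_t -> bool} -> {ffun 'I_t -> bool} -> bool).
Variable (p : 'I_n -> 'rV[R]_d).

Definition U i a := b i + \sum_(j < d) ax i ord0 j * p a ord0 j.
Definition W i a := - \sum_(j < d) ay i ord0 j * p a ord0 j.

Lemma linfE i a c : linf ax ay b i (p a) (p c) = U i a - W i c.
Proof. by rewrite /linf /U /W opprK. Qed.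

Definition rk i (v : R) : nat :=
  (#|[set a | (U i a < v)%R]| + #|[set a | (W i a < v)%R]|)%N.

Lemma rk_le i v : (rk i v <= n + n)%N.
Proof.
by rewrite /rk; apply: leq_add; apply: leq_trans (max_card _) _; rewrite card_ord.
Qed.

Lemma rk_mono i v v' : (exists a, v = U i a \/ v = W i a) -> v < v' ->
  (rk i v < rk i v')%N.
Proof.
move=> [a [->|->]] lt.
- have h1 : (#|[set c | (U i c < U i a)%R]| < #|[set c | (U i c < v')%R]|)%N.
    apply: proper_card; apply/properP; split.
      by apply/fintype.subsetP=> c; rewrite !inE => h; apply: lt_trans lt.
    by exists a; rewrite !inE ?ltxx.
  have h2 : (#|[set c | (W i c < U i a)%R]| <= #|[set c | (W i c < v')%R]|)%N.
    by apply: subset_leq_card; apply/fintype.subsetP=> c; rewrite !inE => h; apply: lt_trans lt.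
  rewrite /rk; lia.
- have h1 : (#|[set c | (W i c < W i a)%R]| < #|[set c | (W i c < v')%R]|)%N.
    apply: proper_card; apply/properP; split.
      by apply/fintype.subsetP=> c; rewrite !inE => h; apply: lt_trans lt.
    by exists a; rewrite !inE ?ltxx.
  have h2 : (#|[set c | (U i c < W i a)%R]| <= #|[set c | (U i c < v')%R]|)%N.
    by apply: subset_leq_card; apply/fintype.subsetP=> c; rewrite !inE => h; apply: lt_trans lt.
  rewrite /rk; lia.
Qed.

Lemma rk_cmp i a c :
  [/\ (U i a < W i c) = (rk i (U i a) < rk i (W i c))%N,
      (U i a <= W i c) = (rk i (U i a) <= rk i (W i c))%N &
      (U i a == W i c) = (rk i (U i a) == rk i (W i c))].
Proof.
have [l|l|E] := ltgtP (U i a) (W i c).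
- have h : (rk i (U i a) < rk i (W i c))%N by apply: rk_mono l; exists a; left.
  by rewrite h (ltnW h) (ltn_eqF h).
- have h : (rk i (W i c) < rk i (U i a))%N by apply: rk_mono l; exists c; right.
  by rewrite ltnNge (ltnW h) leqNgt h eq_sym (ltn_eqF h).
- by rewrite E ltnn leqnn eqxx.
Qed.

Definition ru i a := rk i (U i a).
Definition rw i a := rk i (W i a).

Lemma valE a c : semilin_val ax ay b phi (p a) (p c) =
  phi [ffun i => (ru i a < rw i c)%N] [ffun i => (ru i a <= rw i c)%N]
      [ffun i => ru i a == rw i c].
Proof.
rewrite /semilin_val; congr phi; apply/ffunP=> i; rewrite !ffunE linfE;
  have [E1 E2 E3] := rk_cmp i a c.
- by rewrite subr_lt0 E1.
- by rewrite subr_le0 E2.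
- by rewrite subr_eq0 E3.
Qed.

Definition K := (trunc_log 2 n).+1.

Lemma rk_lt i v : (rk i v < 2 ^ K.+1)%N.
Proof.
have h1 := rk_le i v; have h2 := trunc_log_ltn n (isT : (1 < 2)%N).
rewrite /K expnS; lia.
Qed.

Definition clsI i a := cls (ru i a) (rw i a).
Definition posI i a := pos (ru i a) (rw i a).

Definition code a : {ffun 'I_t -> option ('I_K.+1 * bool)} :=
  [ffun i => omap (fun jc : nat * bool => (inord jc.1 : 'I_K.+1, jc.2)) (clsI i a)].

Lemma clsI_bound i a jc : clsI i a = Some jc -> (jc.1 <= K)%N.
Proof.
rewrite /clsI /cls; case: eqP => // _ [<-] /=.
by apply: jdx_bound; apply: rk_lt.
Qed.

Lemma code_inj a c i : code a = code c -> clsI i a = clsI i c.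
Proof.
move/ffunP/(_ i); rewrite !ffunE.
case E1: (clsI i a) => [[j1 c1]|]; case E2: (clsI i c) => [[j2 c2]|] //= [] /(congr1 val).
have b1 := clsI_bound _ _ _ E1; have b2 := clsI_bound _ _ _ E2.
by rewrite /= !inordK // => -> ->.
Qed.

Definition pat a c : {ffun 'I_t -> bool} * {ffun 'I_t -> bool} :=
  ([ffun i => (posI i a < posI i c)%N], [ffun i => posI i a == posI i c]).

Lemma pat_trans x y z : code x = code y -> code y = code z ->
  pat x y = pat y z -> pat x z = pat x y.
Proof.
move=> _ _ [/ffunP h1 /ffunP h2].
congr pair; apply/ffunP=> i; have := h1 i; have := h2 i; rewrite !ffunE => e2 e1;
  have [E3 E4] := tr3 e1 e2; by rewrite ?E3 ?E4.
Qed.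

Lemma valG x y : code x = code y -> semilin_val ax ay b phi (p x) (p y) =
  phi [ffun i => Glt (clsI i x) (posI i x < posI i y)%N (posI i x == posI i y)]
      [ffun i => Gle (clsI i x) (posI i x < posI i y)%N (posI i x == posI i y)]
      [ffun i => Geq (clsI i x) (posI i x < posI i y)%N (posI i x == posI i y)].
Proof.
move=> cxy; rewrite valE; congr phi; apply/ffunP=> i; rewrite !ffunE;
  have [E1 E2 E3] := key (code_inj _ _ i cxy); by [rewrite E1|rewrite E2|rewrite E3].
Qed.

Lemma e_det x y x' y' : code x = code y -> code x' = code y' ->
  code x = code x' -> pat x y = pat x' y' -> x != y -> x' != y' ->
  semilin_rel ax ay b phi p x y = semilin_rel ax ay b phi p x' y'.
Proof.
move=> cxy cx'y' cxx' [/ffunP h1 /ffunP h2] nxy nx'y'.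
rewrite /semilin_rel nxy nx'y' /= (valG _ _ cxy) (valG _ _ cx'y').
by congr phi; apply/ffunP=> i; rewrite !ffunE (code_inj _ _ i cxx'); have := h1 i; have := h2 i;
  rewrite !ffunE => -> ->.
Qed.

End Semi.

Lemma final_ineq (R : realType) (t n s T : nat) : (2 <= n)%N -> (0 < s)%N ->
  (2 ^ T <= n)%N ->
  (((2 * T + 5) ^ t * s.+1 ^ (4 ^ t))%:R : R) <=
  ((7 / ln 2) ^+ t * 2 ^+ (4 ^ t)) * powR s%:R (4 ^ t)%:R * powR (ln n%:R) t%:R.
Proof.
move=> n2 s0 hT.
have ln2 : 0 < ln (2 : R) by apply: ln_gt0; lra.
have npos : (0 : R) < n%:R by rewrite ltr0n; lia.
have hL : ln (2 : R) <= ln n%:R.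
  rewrite ler_ln; first by rewrite ler_nat.
    by rewrite posrE; lra.
  by rewrite posrE.
have hT' : T%:R * ln (2 : R) <= ln n%:R.
  have : ln ((2 : R) ^+ T) <= ln n%:R.
    rewrite ler_ln; first by rewrite -natrX ler_nat.
      by rewrite posrE exprn_gt0 //; lra.
    by rewrite posrE.
  rewrite lnXn; last lra. by rewrite mulrC mulr_natr.
have L0 : 0 <= ln (n%:R : R) by lra.
rewrite powR_mulrn ?ler0n // powR_mulrn //.
rewrite natrM !natrX.
have h1 : ((2 * T + 5)%:R : R) <= 7 / ln 2 * ln n%:R.
  rewrite mulrAC ler_pdivlMr // natrD natrM.
  nra.
have h2 : (s.+1%:R : R) <= 2 * s%:R.
  rewrite -natrM ler_nat; lia.
have -> : (7 / ln 2) ^+ t * 2 ^+ (4 ^ t)%N * s%:R ^+ (4 ^ t)%N * ln n%:R ^+ t =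
          (7 / ln 2 * ln (n%:R : R)) ^+ t * (2 * s%:R) ^+ (4 ^ t)%N.
  by rewrite !exprMn; ring.
apply: ler_pM; rewrite ?exprn_ge0 ?ler0n //.
- by apply: lerXn2r; rewrite ?nnegrE ?ler0n // mulr_ge0 // divr_ge0 // ?ltW //; lra.
- by apply: lerXn2r; rewrite ?nnegrE ?ler0n // mulr_ge0 // ler0n.
Qed.

Theorem theorem1p4 (R : realType) (t : nat) : (0 < t)%N ->
  exists alpha beta gamma : R,
    [/\ 0 < alpha, 0 < beta, 0 < gamma &
    forall (s n d : nat) (ax ay : 'I_t -> 'rV[R]_d) (b : 'I_t -> R)
      (phi : {ffun 'I_t -> bool} -> {ffun 'I_t -> bool} -> {ffun 'I_t -> bool} -> bool)
      (p : 'I_n -> 'rV[R]_d),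
      (0 < s)%N -> (2 <= n)%N -> (0 < d)%N ->
      injective p ->
      (* the truth value is unchanged when x and y are swapped *)
      (forall i j : 'I_n, i != j ->
         semilin_val ax ay b phi (p i) (p j) = semilin_val ax ay b phi (p j) (p i)) ->
      (* G contains no clique of size s *)
      (forall S : {set 'I_n}, #|S| = s -> ~ clique (semilin_rel ax ay b phi p) S) ->
      ((chromatic_number (semilin_rel_irr ax ay b phi p))%:R : R)
        <= alpha * powR (s%:R) beta * powR (ln (n%:R)) gamma].
Proof.
move=> t0.
have ln2 : 0 < ln (2 : R) by apply: ln_gt0; lra.
exists ((7 / ln 2) ^+ t * 2 ^+ (4 ^ t)%N), (4 ^ t)%:R, t%:R; split.
- by apply: mulr_gt0; apply: exprn_gt0 => //; apply: divr_gt0.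
- by rewrite ltr0n expn_gt0.
- by rewrite ltr0n.
move=> s n d ax ay b phi p s0 n2 d0 pinj hsym hcl.
have esym : forall x y, semilin_rel ax ay b phi p x y -> semilin_rel ax ay b phi p y x.
  move=> x y /andP [nxy v]; apply/andP; split; first by rewrite eq_sym.
  by rewrite -hsym.
have nocl : forall S : {set 'I_n}, #|S| = s ->
    ~ (forall x y, x \in S -> y \in S -> x != y -> semilin_rel ax ay b phi p x y).
  by move=> S hS; apply: hcl S hS.
have col := colA_colorable (semilin_rel_irr ax ay b phi p) esym nocl
  (@pat_trans R t d n ax ay b p) (@e_det R t d n ax ay b phi p).
have chi : (chromatic_number (semilin_rel_irr ax ay b phi p) <=
            (2 * trunc_log 2 n + 5) ^ t * s.+1 ^ (4 ^ t))%N.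
  rewrite /chromatic_number; case: ex_minnP => m _ min.
  apply: leq_trans (min _ col) _.
  rewrite !fintype.card_prod !finfun.card_ffun ?fintype.card_option ?fintype.card_prod ?finfun.card_ffun ?fintype.card_bool ?fintype.card_ord ?fintype.card_prod ?finfun.card_ffun ?fintype.card_bool ?fintype.card_ord.
  rewrite -expnMn /K (_ : (((trunc_log 2 n).+2 * 2).+1 = 2 * trunc_log 2 n + 5)%N) //; lia.
have n0 : (0 < n)%N by lia.
have := final_ineq R t n s (trunc_log 2 n) n2 s0 (trunc_logP (isT : (1 < 2)%N) n0).
by apply: le_trans; rewrite ler_nat.
Qed.
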